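(* Let $(R,\mathfrak m,k)$ be a one-dimensional analytically irreducible local domain (i.e. the integral closure $\overline R$ of $R$ in its fraction field $Q(R)$ is a finitely generated $R$-module and a local ring, hence a discrete valuation ring with maximal ideal $\mathfrak n$), such that the canonical map $k\to \overline R/\mathfrak n$ is an isomorphism. Let $v$, $a_i$, $n$, $I_i$, $\mathcal T(R)$, $\mathcal I(R)$ be as in the context, and assume $n\ge 3$. Then the following are equivalent: (1) $\mathcal T(R)=\mathcal I(R)$; (2) for each $1\le i\le n-2$ there exists $q_i\in R$ with $v(q_i)=a_i$ and $I_iI_{i+2}=q_iI_{i+2}$; (3) for each $1\le i\le n-2$ and each $q_i\in R$ with $v(q_i)=a_i$, the equality $I_iI_{i+2}=q_iI_{i+2}$ holds. If moreover $k$ is infinite, these are also equivalent to: (4) $\mathcal T(R)$ is a finite set.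
   Context: $v\colon Q(R)\to\mathbb Z\cup\{\infty\}$ is the normalized discrete valuation associated to $\overline R$. The value semigroup $H=v(R)=\{v(r)\mid 0\ne r\in R\}$ is written $H=\{a_0=0<a_1<a_2<\cdots\}$, and $n$ is the smallest integer such that $a_{n+i}=a_n+i$ for all $i\ge0$. For $0\le i\le n$, $I_i=\{r\in R\mid v(r)\ge a_i\}$, and $\mathcal I(R)=\{I_0,\dots,I_n\}$ (these are exactly the integrally closed ideals containing the conductor $R:\overline R$). The trace ideal of an $R$-module $M$ is $\mathrm{tr}_R(M)=\sum_{f\in\mathrm{Hom}_R(M,R)}\mathrm{Im} f$; an ideal is a trace ideal if it equals $\mathrm{tr}_R(M)$ for some $M$. $\mathcal T(R)$ denotes the set of nonzero (equivalently regular) trace ideals of $R$. *)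

(* Defs.v *)
From HB Require Import structures.
From mathcomp Require Import all_boot all_order all_algebra.
Set Implicit Arguments. Unset Strict Implicit. Unset Printing Implicit Defensive.
Import Order.TTheory GRing.Theory Num.Theory.
Local Open Scope ring_scope.

Section Defs.
Variable R : idomainType.

Definition QR := {fraction R}.
Definition emb (r : R) : QR := @FracField.tofrac R r.

Definition is_ideal (I : R -> Prop) : Prop :=
  [/\ I 0, (forall x y, I x -> I y -> I (x + y)) & (forall r x, I x -> I (r * x))].

Definition ideal_eq (I J : R -> Prop) : Prop := forall x, I x <-> J x.

Definition ideal_strict_sub (I J : R -> Prop) : Prop :=
  (forall x, I x -> J x) /\ exists x, J x /\ ~ I x.

Definition is_prime_ideal (P : R -> Prop) : Prop :=
  [/\ is_ideal P, ~ P 1 & forall x y, P (x * y) -> P x \/ P y].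

Definition noetherian : Prop :=
  forall I, is_ideal I -> exists (k : nat) (g : 'I_k -> R),
    forall x, I x <-> exists c : 'I_k -> R, x = \sum_(j < k) c j * g j.

(* local ring: the non-units form an ideal (equivalently, are closed under +) *)
Definition local_ring : Prop :=
  forall x y : R, x \isn't a GRing.unit -> y \isn't a GRing.unit ->
              (x + y) \isn't a GRing.unit.

Definition max_ideal (x : R) : Prop := x \isn't a GRing.unit.

Definition krull_dim_one : Prop :=
  (exists P Q, [/\ is_prime_ideal P, is_prime_ideal Q & ideal_strict_sub P Q]) /\
  ~ (exists P Q S, [/\ is_prime_ideal P, is_prime_ideal Q, is_prime_ideal S,
                       ideal_strict_sub P Q & ideal_strict_sub Q S]).

Definition in_Rbar (x : QR) : Prop := integralOver emb x.

Definition Rbar_finite : Prop :=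
  exists (k : nat) (b : 'I_k -> QR), (forall j, in_Rbar (b j)) /\
    forall x, in_Rbar x -> exists c : 'I_k -> R, x = \sum_(j < k) emb (c j) * b j.

Definition Rbar_unit (x : QR) : Prop :=
  in_Rbar x /\ exists y, in_Rbar y /\ x * y = 1.

Definition Rbar_local : Prop :=
  forall x y, in_Rbar x -> in_Rbar y -> ~ Rbar_unit x -> ~ Rbar_unit y ->
    ~ Rbar_unit (x + y).

Definition Rbar_max (x : QR) : Prop := in_Rbar x /\ ~ Rbar_unit x.

(* the canonical map k = R/m -> Rbar/nbar is an isomorphism
   (well-definedness: m maps into nbar; injective; surjective) *)
Definition residue_iso : Prop :=
  [/\ (forall r, max_ideal r -> Rbar_max (emb r)),
      (forall r, Rbar_max (emb r) -> max_ideal r) &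
      (forall x, in_Rbar x -> exists r, Rbar_max (x - emb r))].

(* k = R/m is infinite: no finite set of elements of R represents all classes *)
Definition residue_field_infinite : Prop :=
  ~ exists s : seq R, forall r, exists2 t, t \in s & max_ideal (r - t).

(* ---- the normalized discrete valuation of Q(R) associated to Rbar ----
   v is only meaningful on nonzero elements (v(0) = infinity). *)
Definition normalized_valuation_of_Rbar (v : QR -> int) : Prop :=
  [/\ (forall x y, x != 0 -> y != 0 -> v (x * y) = v x + v y),
      (forall x y, x != 0 -> y != 0 -> x + y != 0 -> Order.min (v x) (v y) <= v (x + y)),
      (forall z : int, exists2 x, x != 0 & v x = z) &
      (forall x, x != 0 -> (in_Rbar x <-> 0 <= v x))].

Definition value_semigroup (v : QR -> int) (h : int) : Prop :=
  exists2 r : R, r != 0 & v (emb r) = h.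

Definition enumerates_H (v : QR -> int) (a : nat -> int) : Prop :=
  (forall i, a i < a i.+1) /\ (forall h, value_semigroup v h <-> exists i, a i = h).

Definition conductor_index (a : nat -> int) (n : nat) : Prop :=
  (forall i, a (n + i)%N = a n + i%:Z) /\
  (forall m, (forall i, a (m + i)%N = a m + i%:Z) -> (n <= m)%N).

Definition Iv (v : QR -> int) (a : nat -> int) (i : nat) (r : R) : Prop :=
  r = 0 \/ a i <= v (emb r).

Definition ideal_mul (I J : R -> Prop) (x : R) : Prop :=
  exists (k : nat) (ys zs : 'I_k -> R),
    [/\ forall j, I (ys j), forall j, J (zs j) & x = \sum_(j < k) ys j * zs j].

Definition elem_mul (q : R) (J : R -> Prop) (x : R) : Prop :=
  exists2 y, J y & x = q * y.

Definition is_hom (M : lmodType R) (f : M -> R) : Prop :=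
  forall (c : R) (x y : M), f (c *: x + y) = c * f x + f y.

(* tr_R(M) = sum of the images of all R-linear maps M -> R *)
Definition trace (M : lmodType R) (x : R) : Prop :=
  exists (k : nat) (fs : 'I_k -> M -> R) (ms : 'I_k -> M),
    (forall j, is_hom (fs j)) /\ x = \sum_(j < k) fs j (ms j).

Definition is_trace_ideal (I : R -> Prop) : Prop :=
  exists M : lmodType R, ideal_eq I (trace M).

Definition in_T (I : R -> Prop) : Prop :=
  is_trace_ideal I /\ exists x, I x /\ x <> 0.

Definition in_I (v : QR -> int) (a : nat -> int) (n : nat) (I : R -> Prop) : Prop :=
  exists2 i, (i <= n)%N & ideal_eq I (Iv v a i).

Definition T_finite : Prop :=
  exists (k : nat) (Js : 'I_k -> (R -> Prop)),
    forall I, in_T I -> exists j, ideal_eq I (Js j).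

End Defs.

(* Main.v *)
Require Import Defs.
From HB Require Import structures.
From mathcomp Require Import all_boot all_order all_algebra.
From mathcomp Require Import zify boolp ring.
Import Order.TTheory GRing.Theory Num.Theory.
Local Open Scope ring_scope.
Set Implicit Arguments. Unset Strict Implicit. Unset Printing Implicit Defensive.

Lemma frac_repr (R : idomainType) (x : {fraction R}) :
  exists a b : R, b != 0 /\ x = (@FracField.tofrac R a) / (@FracField.tofrac R b).
Proof.
elim/quotW: x => r.
exists (r.1), (r.2); split; first exact: denom_ratioP.
unlock FracField.tofrac.
rewrite -[_^-1]FracField.pi_inv -[_ * _]FracField.pi_mul.
apply/eqmodP; rewrite /= FracField.equivfE /FracField.mulf /FracField.invf.
have h := denom_ratioP r.
rewrite !numden_Ratio ?oner_neq0 ?mulf_neq0 ?oner_neq0 //.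
by rewrite !mul1r !mulr1 mulrC.
Qed.

Section G. Variable F : fieldType.
Lemma G3 (q z y t : F) : q != 0 -> y * z = q * t -> z / q * y = t.
Proof. by move=> hq E; rewrite mulrAC [z * y]mulrC E mulrC mulKf. Qed.
Lemma G4 (d P c m : F) : d != 0 -> d * P * (c * (m / d)) = c * (m * P).
Proof.
move=> hd; set u := m / d; have -> : m = d * u by rewrite mulrC divfK.
ring.
Qed.
Lemma G5 (q p s y1 t : F) : q != 0 -> p * y1 = q * t -> p / q * (s * q + y1) = s * p + t.
Proof.
move=> hq E; rewrite mulrDr (G3 hq (etrans (mulrC _ _) E)); congr (_ + _).
by rewrite mulrCA divfK.
Qed.
Lemma G6 (q x r : F) : q != 0 -> x / q = r -> x = q * r.
Proof. by move=> hq <-; rewrite mulrC divfK. Qed.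
End G.

Section Sub.
Variables (R : idomainType) (J : R -> Prop).
Definition idl (r : R^o) : bool := `[< is_ideal J -> J r >].
Lemma idl_closed : subsemimod_closed idl.
Proof.
split; [split|].
- by apply/asboolP => -[].
- move=> x y /asboolP hx /asboolP hy; apply/asboolP => hI.
  case: (hI) => _ hD _; exact: hD (hx hI) (hy hI).
- move=> c x /asboolP hx; apply/asboolP => hI.
  case: (hI) => _ _ hM; exact: hM c _ (hx hI).
Qed.
HB.instance Definition _ := GRing.isSubmodClosed.Build R R^o idl idl_closed.
Record Jel := JEl { jval :> R^o; _ : jval \in idl }.
HB.instance Definition _ := [isSub for jval].
HB.instance Definition _ := [Choice of Jel by <:].
HB.instance Definition _ := [SubChoice_isSubLmodule of Jel by <:].
Lemma jval_hom : is_hom (jval : Jel -> R).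
Proof. by []. Qed.
Lemma jvalZ (c : R) (x : Jel) : jval (c *: x) = c * jval x.
Proof. by []. Qed.
Lemma jval_in (x : Jel) : is_ideal J -> J (jval x).
Proof. by case: x => y /= /asboolP. Qed.
Lemma in_idl (y : R) : J y -> y \in idl.
Proof. by move=> hy; apply/asboolP. Qed.
End Sub.

Section Main.
Variables (R : idomainType) (v : QR R -> int) (a : nat -> int) (n : nat).
Hypotheses (Hfin : Rbar_finite R) (Hres : residue_iso R)
  (Hv : normalized_valuation_of_Rbar v) (Ha : enumerates_H v a)
  (Hn : conductor_index a n) (Hn3 : (3 <= n)%N).

Local Notation Q := (QR R).
Local Notation w r := (v (emb r)).

Lemma emb_inj (x y : R) : emb x = emb y -> x = y.
Proof. by move=> h; apply/eqP; rewrite -(tofrac_eq (R:=R)); apply/eqP. Qed.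
Lemma emb0 : emb (0 : R) = 0. Proof. exact: tofrac0. Qed.
Lemma emb1 : emb (1 : R) = 1. Proof. exact: tofrac1. Qed.
Lemma embD (x y : R) : emb (x + y) = emb x + emb y. Proof. exact: tofracD. Qed.
Lemma embB (x y : R) : emb (x - y) = emb x - emb y. Proof. exact: tofracB. Qed.
Lemma embN (x : R) : emb (- x) = - emb x. Proof. exact: tofracN. Qed.
Lemma embM (x y : R) : emb (x * y) = emb x * emb y. Proof. exact: tofracM. Qed.
Lemma emb_eq0 (x : R) : (emb x == 0) = (x == 0). Proof. exact: tofrac_eq0. Qed.
Lemma emb_neq0 (x : R) : x != 0 -> emb x != 0. Proof. by rewrite emb_eq0. Qed.

Lemma emb_sum k (F : 'I_k -> R) : emb (\sum_(j < k) F j) = \sum_(j < k) emb (F j).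
Proof. by rewrite /emb rmorph_sum. Qed.

Lemma vM (x y : Q) : x != 0 -> y != 0 -> v (x * y) = v x + v y.
Proof. by case: Hv => h _ _ _; apply: h. Qed.
Lemma vmin (x y : Q) : x != 0 -> y != 0 -> x + y != 0 -> Order.min (v x) (v y) <= v (x + y).
Proof. by case: Hv => _ h _ _; apply: h. Qed.
Lemma v1 : v 1 = 0.
Proof. have := vM (oner_neq0 Q) (oner_neq0 Q); rewrite mulr1 => h.
by apply: (addrI (v 1)); rewrite addr0 -h. Qed.
Lemma vV (x : Q) : x != 0 -> v (x^-1) = - v x.
Proof.
move=> hx; have hi : x^-1 != 0 by rewrite invr_eq0.
have := vM hx hi; rewrite mulfV // v1 => h; lia.
Qed.
Lemma vN (x : Q) : v (- x) = v x.
Proof.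
have hm1 : (-1 : Q) != 0 by rewrite oppr_eq0 oner_neq0.
have h1 : v (-1) = 0.
  have := vM hm1 hm1; rewrite mulrNN mulr1 v1 => h; lia.
case: (eqVneq x 0) => [->|hx]; first by rewrite oppr0.
by rewrite -mulN1r vM // h1 add0r.
Qed.
Lemma vdiv (x y : Q) : x != 0 -> y != 0 -> v (x / y) = v x - v y.
Proof. by move=> hx hy; rewrite vM ?invr_eq0 // vV. Qed.

Lemma vD_lt (x y : Q) : x != 0 -> y != 0 -> v x < v y -> x + y != 0 /\ v (x + y) = v x.
Proof.
move=> hx hy hlt.
have hs : x + y != 0.
  apply/negP => /eqP h; have : y = - x by rewrite -(addKr x y) h addr0.
  by move=> e; move: hlt; rewrite e vN ltxx.
split=> //.
have h1 := vmin hx hy hs.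
have hny : - y != 0 by rewrite oppr_eq0.
have hxx : (x + y) + - y != 0 by rewrite addrK.
have h2 := vmin hs hny hxx; rewrite addrK vN in h2.
lia.
Qed.
Lemma vD_ge (x y : Q) (b : int) : x + y != 0 -> (x == 0) || (b <= v x) -> (y == 0) || (b <= v y) -> b <= v (x + y).
Proof.
move=> hs hx hy.
have [ex|nx] := eqVneq x 0.
  move: hs; rewrite ex add0r => hs; case/orP: hy => [ey|//].
  by rewrite ey in hs.
have [ey|ny] := eqVneq y 0; first by move: hx; rewrite ey addr0 (negPf nx).
move: hx hy; rewrite (negPf nx) (negPf ny) /= => hbx hby.
have := vmin nx ny hs; lia.
Qed.
Lemma vB_lt (x y : Q) : x != 0 -> y != 0 -> v x < v y -> x - y != 0 /\ v (x - y) = v x.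
Proof. by move=> hx hy hl; apply: vD_lt; rewrite ?oppr_eq0 ?vN. Qed.

Lemma in_Rbar_v (x : Q) : x != 0 -> (in_Rbar x <-> 0 <= v x).
Proof. by case: Hv => _ _ _ h; apply: h. Qed.
Lemma v_surj (z : int) : exists2 x : Q, x != 0 & v x = z.
Proof. by case: Hv => _ _ h _; apply: h. Qed.

Lemma a_lt i j : (i < j)%N -> a i < a j.
Proof.
case: Ha => hinc _; elim: j => // j IH; rewrite ltnS leq_eqVlt => /orP[/eqP ->|/IH h].
  exact: hinc.
exact: lt_trans h (hinc j).
Qed.
Lemma a_le i j : (i <= j)%N -> a i <= a j.
Proof. by rewrite leq_eqVlt => /orP[/eqP ->//|/a_lt/ltW]. Qed.
Lemma a_le_inv i j : a i <= a j -> (i <= j)%N.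
Proof. by move=> h; rewrite leqNgt; apply/negP => /a_lt; rewrite ltNge h. Qed.
Lemma a_lt_inv i j : a i < a j -> (i < j)%N.
Proof. by move=> h; rewrite ltnNge; apply/negP => /a_le; rewrite leNgt h. Qed.
Lemma a_inj i j : a i = a j -> i = j.
Proof. by move=> h; apply/eqP; rewrite eqn_leq !a_le_inv ?h. Qed.

Lemma w_H (r : R) : r != 0 -> exists j, a j = w r.
Proof. by move=> hr; case: Ha => _ h; apply/h; exists r. Qed.
Lemma exist_val j : exists r : R, r != 0 /\ w r = a j.
Proof. by case: Ha => _ h; case: (proj2 (h (a j)) (ex_intro _ j erefl)) => r hr e; exists r. Qed.

Lemma w1 : w 1 = 0. Proof. by rewrite emb1 v1. Qed.
Lemma wM (r s : R) : r != 0 -> s != 0 -> w (r * s) = w r + w s.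
Proof. by move=> hr hs; rewrite embM vM ?emb_neq0. Qed.

Lemma a0 : a 0 = 0.
Proof.
have [j hj] := w_H (oner_neq0 R); rewrite w1 in hj.
have [r [hr hrw]] := exist_val 0.
have hle : a 0 <= 0 by rewrite -hj a_le.
have [k hk] := w_H (mulf_neq0 hr hr).
rewrite wM // hrw in hk.
have : a 0 <= a k by apply: a_le.
lia.
Qed.
Lemma w_ge0 (r : R) : r != 0 -> 0 <= w r.
Proof. by move=> /w_H [j <-]; rewrite -a0 a_le. Qed.

Local Notation c := (a n).
Lemma a_cond i : a (n + i) = c + i%:Z.
Proof. by case: Hn => h _; apply: h. Qed.
Lemma H_ge_c (h : int) : c <= h -> exists j, a j = h.
Proof.
move=> hh; exists (n + `|h - c|%N)%N; rewrite a_cond.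
have -> : (`|h - c|%N)%:Z = h - c by apply: gez0_abs; lia.
lia.
Qed.
Lemma gap (r : R) : r != 0 -> w r <> c - 1.
Proof.
move=> hr e; have [m hm] := w_H hr; rewrite e in hm.
have hmn : (m < n)%N by apply: a_lt_inv; lia.
have hn1 : (n.-1 < n)%N by lia.
have hle : a m <= a n.-1 by apply: a_le; lia.
have hlt := a_lt hn1.
have ha1 : a n.-1 = c - 1 by lia.
have : (n <= n.-1)%N.
  case: Hn => _ hmin; apply: hmin => i.
  case: i => [|i]; first by rewrite addn0 addr0.
  have -> : (n.-1 + i.+1 = n + i)%N by lia.
  rewrite a_cond ha1; lia.
lia.
Qed.

Lemma Rbar_max_val (z : Q) : Rbar_max z -> z = 0 \/ 0 < v z.
Proof.
case=> hin hnu; have [->|hz] := eqVneq z 0; first by left.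
right; have h0 := proj1 (in_Rbar_v hz) hin.
rewrite lt_neqAle h0 andbT; apply/negP => /eqP e.
apply: hnu; split=> //; exists z^-1; split; last by rewrite mulfV.
by apply/in_Rbar_v; rewrite ?invr_eq0 // vV // -e oppr0.
Qed.

Lemma unitR (r : R) : r != 0 -> w r = 0 -> r \is a GRing.unit.
Proof.
move=> hr e; apply/negPn/negP => hnu.
case: Hres => h1 _ _; have := Rbar_max_val (h1 r hnu).
case=> [/eqP|]; first by rewrite emb_eq0 (negPf hr).
by rewrite e ltxx.
Qed.

Lemma w_unit (u : R) : u \is a GRing.unit -> u != 0 /\ w u = 0.
Proof.
move=> hu; have hu0 : u != 0 by apply/negP => /eqP e; move: hu; rewrite e unitr0.
have hi0 : u^-1 != 0 by rewrite invr_eq0.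
split=> //; have := wM hu0 hi0; rewrite mulrV // w1 => e.
have := w_ge0 hu0; have := w_ge0 hi0; lia.
Qed.

Lemma approx (r y : R) : r != 0 -> y != 0 -> w r = w y ->
  exists s, (r - s * y == 0) || (w r < w (r - s * y)).
Proof.
move=> hr hy e.
set x := emb r / emb y.
have hry : emb r != 0 by apply: emb_neq0.
have hyy : emb y != 0 by apply: emb_neq0.
have hx : x != 0 by rewrite mulf_neq0 ?invr_eq0.
have vx : v x = 0 by rewrite /x vdiv // e subrr.
have hin : in_Rbar x by apply/in_Rbar_v => //; rewrite vx.
case: Hres => _ _ h3; have [s hs] := h3 x hin.
exists s.
have ee : emb (r - s * y) = emb y * (x - emb s).
  by rewrite embB embM /x mulrBr mulrCA mulfV // mulr1 mulrC.
have [e0|hne] := eqVneq (x - emb s) 0.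
  by rewrite -emb_eq0 ee e0 mulr0 eqxx.
have hpos : 0 < v (x - emb s).
  by case: (Rbar_max_val hs) => // e0; rewrite e0 eqxx in hne.
apply/orP; right; rewrite ee vM // e; lia.
Qed.

Lemma common_denom : exists2 d : R, d != 0 &
  forall x, in_Rbar x -> exists r, emb d * x = emb r.
Proof.
case: Hfin => k [b [hb hgen]].
have : forall j : 'I_k, exists p : R * R, p.2 != 0 /\ b j = emb p.1 / emb p.2.
  move=> j; have [x [y [hy e]]] := frac_repr (b j); by exists (x, y).
case/fin_all_exists => f hf.
exists (\prod_j (f j).2); first by apply/prodf_neq0 => j _; case: (hf j).
move=> x /hgen [cf ->].
exists (\sum_j cf j * ((f j).1 * \prod_(l | l != j) (f l).2)).
rewrite mulr_sumr emb_sum; apply: eq_bigr => j _.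
case: (hf j) => hj ->.
rewrite (bigD1 j) //= !embM /emb rmorph_prod /=.
have hd : FracField.tofrac (f j).2 != 0 by rewrite tofrac_eq0.
exact: G4.
Qed.

Lemma F1 (x : Q) : x != 0 -> c <= v x -> exists r, x = emb r.
Proof.
move=> hx hc.
have [d hd hD] := common_denom.
have hed : emb d != 0 by apply: emb_neq0.
set e := v (emb d).
have stepB : forall y : Q, y != 0 -> e <= v y -> exists r, y = emb r.
  move=> y hy hey.
  have hyd : y / emb d != 0 by rewrite mulf_neq0 ?invr_eq0.
  have hin : in_Rbar (y / emb d) by apply/in_Rbar_v => //; rewrite vdiv //; lia.
  have [r hr] := hD _ hin; exists r; rewrite -hr mulrC divfK //.
suff: forall N : nat, forall y : Q, y != 0 -> c <= v y -> e - v y <= N%:Z -> exists r, y = emb r.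
  move=> /(_ `|e - v x|%N x hx hc); apply; lia.
elim=> [|N IH] y hy hcy hN.
  apply: stepB => //; lia.
have [hle|hlt] := lerP e (v y); first exact: stepB.
have [j hj] := H_ge_c hcy.
have [r0 [hr0 hw0]] := exist_val j.
set z := y / emb r0.
have hr0e : emb r0 != 0 by apply: emb_neq0.
have hz : z != 0 by rewrite mulf_neq0 ?invr_eq0.
have vz : v z = 0 by rewrite /z vdiv // hw0 hj subrr.
have hin : in_Rbar z by apply/in_Rbar_v => //; rewrite vz.
case: Hres => _ _ h3; have [s hs] := h3 z hin.
have ee : y - emb (s * r0) = emb r0 * (z - emb s).
  by rewrite embM /z mulrBr mulrCA mulfV // mulr1 mulrC.
have [e0|hne] := eqVneq (z - emb s) 0.
  by exists (s * r0); apply/eqP; rewrite -subr_eq0 ee e0 mulr0.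
have hpos : 0 < v (z - emb s).
  by case: (Rbar_max_val hs) => // e0; rewrite e0 eqxx in hne.
have hy' : y - emb (s * r0) != 0 by rewrite ee mulf_neq0.
have vy' : v (y - emb (s * r0)) = v y + v (z - emb s) by rewrite ee vM // hw0 hj.
have h1 : c <= v (y - emb (s * r0)) by lia.
have h2 : e - v (y - emb (s * r0)) <= N%:Z by lia.
have [r' hr'] := IH _ hy' h1 h2.
by exists (r' + s * r0); rewrite embD -hr'; ring.
Qed.

Lemma F1R (x y : R) : y != 0 -> c <= w x - w y -> x != 0 ->
  exists r, emb x / emb y = emb r.
Proof.
move=> hy hc hx; apply: F1; first by rewrite mulf_neq0 ?invr_eq0 ?emb_neq0.
by rewrite vdiv ?emb_neq0.
Qed.

Lemma RC (I : R -> Prop) (x : Q) : x != 0 -> (forall r, Iv v a n r -> I r) ->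
  (forall y, I y -> exists r, x * emb y = emb r) -> 0 <= v x.
Proof.
move=> hx hC hcol; rewrite leNgt; apply/negP => hneg.
have [z hz vz] := v_surj (c - 1 - v x).
have hcz : c <= v z by lia.
have [y ey] := F1 hz hcz.
have hy : y != 0 by rewrite -emb_eq0 -ey.
have hyC : Iv v a n y by right; rewrite -ey vz; lia.
have [r er] := hcol y (hC y hyC).
have hxy : x * emb y != 0 by rewrite mulf_neq0 ?emb_neq0.
have hr : r != 0 by rewrite -emb_eq0 -er.
apply: (gap hr); rewrite -er vM ?emb_neq0 // -ey vz; lia.
Qed.

Lemma Iv_ideal j : is_ideal (Iv v a j).
Proof.
split; first by left.
- move=> x y hx hy; have [e0|hs] := eqVneq (x + y) 0; first by left.
  right; rewrite embD; apply: vD_ge; first by rewrite -embD emb_neq0.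
  + by case: hx => [->|h]; rewrite ?emb0 ?eqxx // h orbT.
  + by case: hy => [->|h]; rewrite ?emb0 ?eqxx // h orbT.
- move=> r x [->|hx]; first by left; rewrite mulr0.
  have [->|hr] := eqVneq r 0; first by left; rewrite mul0r.
  have [->|hx0] := eqVneq x 0; first by left; rewrite mulr0.
  right; rewrite wM //; have := w_ge0 hr; lia.
Qed.

Lemma Iv_mono j k r : (j <= k)%N -> Iv v a k r -> Iv v a j r.
Proof. by move=> hjk [->|h]; [left|right; apply: le_trans h; apply: a_le]. Qed.

Lemma Iv_gt j r : r != 0 -> a j < w r -> Iv v a j.+1 r.
Proof.
move=> hr hlt; right; have [k hk] := w_H hr; rewrite -hk in hlt *.
by apply: a_le; apply: a_lt_inv.
Qed.

Lemma Iv_val j r : r != 0 -> Iv v a j r -> a j <= w r.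
Proof. by move=> hr [e|//]; rewrite e eqxx in hr. Qed.

Lemma ideal0 (I : R -> Prop) : is_ideal I -> I 0. Proof. by case. Qed.
Lemma idealD (I : R -> Prop) x y : is_ideal I -> I x -> I y -> I (x + y).
Proof. by case=> _ h _; apply: h. Qed.
Lemma idealM (I : R -> Prop) r x : is_ideal I -> I x -> I (r * x).
Proof. by case=> _ _ h; apply: h. Qed.
Lemma idealN (I : R -> Prop) x : is_ideal I -> I x -> I (- x).
Proof. by move=> hI hx; rewrite -mulN1r; apply: idealM. Qed.
Lemma idealB (I : R -> Prop) x y : is_ideal I -> I x -> I y -> I (x - y).
Proof. by move=> hI hx hy; apply: idealD => //; apply: idealN. Qed.

Lemma FILL (I : R -> Prop) b : is_ideal I -> (forall r, Iv v a n r -> I r) ->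
  (forall j, (b <= j)%N -> exists y, [/\ I y, y != 0 & w y = a j]) ->
  forall r, Iv v a b r -> I r.
Proof.
move=> hI hC hval r hr.
have [->|hr0] := eqVneq r 0; first exact: ideal0.
have [j hj] := w_H hr0.
have hbj : (b <= j)%N by apply: a_le_inv; rewrite hj; exact: Iv_val hr.
suff: forall N r j, r != 0 -> a j = w r -> (b <= j)%N -> (n - j <= N)%N -> I r.
  by move=> /(_ (n - j)%N r j hr0 hj hbj (leqnn _)).
clear r hr hr0 j hj hbj.
elim=> [|N IH] r j hr0 hj hbj hN.
  by apply: hC; right; rewrite -hj; apply: a_le; lia.
have [hnj|hjn] := leqP n j.
  by apply: hC; right; rewrite -hj; apply: a_le.
have [y [hy hy0 hyw]] := hval j hbj.
have eyr : w r = w y by rewrite hyw hj.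
have [s hs] := approx hr0 hy0 eyr.
have -> : r = (r - s * y) + s * y by rewrite subrK.
apply: idealD => //; last exact: idealM.
have [e0|hr1] := eqVneq (r - s * y) 0; first by rewrite e0; apply: ideal0.
have hlt : w r < w (r - s * y) by case/orP: hs => // e; rewrite e in hr1.
have [j1 hj1] := w_H hr1.
have hjj : (j < j1)%N by apply: a_lt_inv; rewrite hj hj1.
apply: (IH _ j1 hr1 hj1); lia.
Qed.

Lemma hom0 (M : lmodType R) (f : M -> R) : is_hom f -> f 0 = 0.
Proof.
move=> hf; have := hf 1 0 0; rewrite scale1r addr0 mul1r => e.
by apply: (addrI (f 0)); rewrite addr0 -e.
Qed.
Lemma homZ (M : lmodType R) (f : M -> R) c m : is_hom f -> f (c *: m) = c * f m.
Proof. by move=> hf; have := hf c m 0; rewrite addr0 hom0 // addr0. Qed.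

Lemma trace1 (M : lmodType R) (f : M -> R) m : is_hom f -> trace M (f m).
Proof. by move=> hf; exists 1%N, (fun _ => f), (fun _ => m); split; rewrite ?big_ord1. Qed.

Lemma trace_ideal (M : lmodType R) : is_ideal (trace M).
Proof.
split.
- exists 0%N, (fun _ _ => 0), (fun _ => 0); split; last by rewrite big_ord0.
  by move=> _ cc x y; rewrite mulr0 addr0.
- move=> x y [k1 [f1 [m1 [h1 ->]]]] [k2 [f2 [m2 [h2 ->]]]].
  exists (k1 + k2)%N, (fun j => match split j with inl j1 => f1 j1 | inr j2 => f2 j2 end),
    (fun j => match split j with inl j1 => m1 j1 | inr j2 => m2 j2 end); split.
    by move=> j; case: (split j).
  rewrite big_split_ord /=; congr (_ + _); apply: eq_bigr => j _.
    by rewrite -[lshift _ _]/(unsplit (inl j)) unsplitK.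
  by rewrite -[rshift _ _]/(unsplit (inr j)) unsplitK.
- move=> r x [k [fs [ms [hf ->]]]].
  exists k, fs, (fun j => r *: ms j); split=> //.
  by rewrite mulr_sumr; apply: eq_bigr => j _; rewrite homZ.
Qed.

Lemma ideal_eq_ideal (I J : R -> Prop) : ideal_eq I J -> is_ideal J -> is_ideal I.
Proof.
move=> e [h0 hD hM]; split; first by apply/e.
- by move=> x y /e hx /e hy; apply/e; apply: hD.
- by move=> r x /e hx; apply/e; apply: hM.
Qed.

Definition COL (I : R -> Prop) := forall x : Q,
  (forall y, I y -> exists r, x * emb y = emb r) ->
  forall y, I y -> exists r, I r /\ x * emb y = emb r.

Lemma TRcol (M : lmodType R) (I : R -> Prop) : ideal_eq I (trace M) -> COL I.
Proof.
move=> hI x hcol y /hI [k [fs [ms [hf ey]]]].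
have hfi : forall j m, I (fs j m) by move=> j m; apply/hI; apply: trace1.
have [g hg] := boolp.choice (fun jm : 'I_k * M => hcol _ (hfi jm.1 jm.2)).
have hgs : forall j, is_hom (fun m => g (j, m)).
  move=> j cc m1 m2; apply: emb_inj.
  rewrite -(hg (j, _)) embD embM -(hg (j, m1)) -(hg (j, m2)) /= (hf j) embD embM.
  ring.
exists (\sum_(j < k) g (j, ms j)); split.
  by apply/hI; exists k, (fun j m => g (j, m)), ms; split.
by rewrite ey emb_sum mulr_sumr emb_sum; apply: eq_bigr => j _; rewrite (hg (j, _)).
Qed.

Lemma TRconv (J : R -> Prop) : is_ideal J -> (exists q, J q /\ q != 0) -> COL J ->
  is_trace_ideal J.
Proof.
move=> hJ [q [hq hq0]] hcol; exists (Jel J) => y; split.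
  move=> hy; exists 1%N, (fun _ => @jval R J), (fun _ => @JEl R J y (in_idl hy)).
  by split; [move=> _; exact: jval_hom | rewrite big_ord1].
case=> [k [fs [ms [hf ->]]]].
apply: (big_ind J); [exact: ideal0 | by move=> *; apply: idealD | move=> j _].
set f := fs j; set m := ms j; have hfh : is_hom f := hf j.
set mq := @JEl R J q (in_idl hq).
have key : forall m' : Jel J, q * f m' = (jval m' : R) * f mq.
  move=> m'; rewrite -!homZ //; congr f; apply: val_inj => /=; exact: mulrC.
set x := emb (f mq) / emb q.
have hqe : emb q != 0 by apply: emb_neq0.
have hx' : forall m' : Jel J, x * emb (jval m' : R) = emb (f m').
  move=> m'; rewrite /x; apply: G3 => //.
  by rewrite -!embM key.
have hx : forall y, J y -> exists r, x * emb y = emb r.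
  by move=> y' hy; exists (f (@JEl R J y' (in_idl hy))); rewrite -hx'.
have [r [hr er]] := hcol x hx _ (jval_in m hJ).
by rewrite hx' in er; rewrite (emb_inj er).
Qed.

Lemma Iv_COL j : (j <= n)%N -> COL (Iv v a j).
Proof.
move=> hj x hcol y hy.
have [->|hx] := eqVneq x 0; first by exists 0; split; [left|rewrite mul0r emb0].
have hv := RC hx (fun r hr => Iv_mono hj hr) hcol.
have [r er] := hcol y hy; exists r; split=> //.
have [ey|hy0] := eqVneq y 0.
  by left; apply: emb_inj; rewrite -er ey emb0 mulr0.
have hxy : x * emb y != 0 by rewrite mulf_neq0 ?emb_neq0.
have hr : r != 0 by rewrite -emb_eq0 -er.
right; rewrite -er vM ?emb_neq0 //; have := Iv_val hy0 hy; lia.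
Qed.

Lemma I_in_T j : (j <= n)%N -> in_T (Iv v a j).
Proof.
move=> hj; have [r [hr hrw]] := exist_val j.
have hIr : Iv v a j r by right; rewrite hrw.
split; last by exists r; split=> //; apply/eqP.
apply: TRconv; [exact: Iv_ideal | by exists r | exact: Iv_COL].
Qed.

Lemma min_index (I : R -> Prop) : (exists x, I x /\ x <> 0) ->
  exists i q, [/\ I q, q != 0, w q = a i & forall y, I y -> y != 0 -> a i <= w y].
Proof.
case=> x [hx hx0].
have ex : exists j, `[< exists y, [/\ I y, y != 0 & w y = a j] >].
  have hx0' : x != 0 by apply/eqP.
  have [j hj] := w_H hx0'; exists j; apply/asboolP; exists x; split=> //; rewrite hj.
case: (ex_minnP ex) => i /asboolP [q [hq hq0 hqw]] hmin.
exists i, q; split=> // y hy hy0.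
have [k hk] := w_H hy0; rewrite -hk; apply: a_le; apply: hmin.
by apply/asboolP; exists y.
Qed.

Definition PP i q := forall y z, Iv v a i y -> Iv v a i.+2 z ->
  exists t, Iv v a i.+2 t /\ y * z = q * t.

Lemma Prod_PP i q :
  ideal_eq (ideal_mul (Iv v a i) (Iv v a i.+2)) (elem_mul q (Iv v a i.+2)) -> PP i q.
Proof.
move=> e y z hy hz.
have : ideal_mul (Iv v a i) (Iv v a i.+2) (y * z).
  by exists 1%N, (fun _ => y), (fun _ => z); split; rewrite ?big_ord1.
by case/e => t ht et; exists t.
Qed.

Lemma PP_Prod i q : Iv v a i q -> PP i q ->
  ideal_eq (ideal_mul (Iv v a i) (Iv v a i.+2)) (elem_mul q (Iv v a i.+2)).
Proof.
move=> hq hP x; split.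
  case=> k [ys [zs [hy hz ->]]].
  apply: (big_ind (elem_mul q (Iv v a i.+2))).
  - by exists 0; [left | rewrite mulr0].
  - move=> x1 x2 [t1 h1 ->] [t2 h2 ->]; exists (t1 + t2); last by rewrite mulrDr.
    exact: idealD (Iv_ideal _) h1 h2.
  - by move=> j _; have [t [ht et]] := hP _ _ (hy j) (hz j); exists t.
case=> t ht ->.
by exists 1%N, (fun _ => q), (fun _ => t); split; rewrite ?big_ord1.
Qed.

Lemma trace_props (I : R -> Prop) : is_trace_ideal I -> is_ideal I /\ COL I.
Proof.
case=> M hM; split; [exact: ideal_eq_ideal hM (trace_ideal M) | exact: TRcol hM].
Qed.

Lemma T_in_I (c3 : forall i, (1 <= i)%N -> (i <= n - 2)%N -> forall q, q != 0 -> w q = a i -> PP i q)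
  (I : R -> Prop) : in_T I -> in_I v a n I.
Proof.
case=> /trace_props [hI hcol] hnz.
have [i [q [hq hq0 hqw hmin]]] := min_index hnz.
have hqe : emb q != 0 := emb_neq0 hq0.
have hC : forall z, Iv v a n z -> I z.
  move=> z hz; have [->|hz0] := eqVneq z 0; first exact: ideal0.
  have hzc := Iv_val hz0 hz.
  set x := emb z / emb q.
  have hx : forall y, I y -> exists r, x * emb y = emb r.
    move=> y hy; have [->|hy0] := eqVneq y 0; first by exists 0; rewrite emb0 mulr0.
    have hmy := hmin y hy hy0.
    have hxy : x * emb y != 0 by rewrite !mulf_neq0 ?invr_eq0 ?emb_neq0.
    apply: F1 => //.
    rewrite vM ?mulf_neq0 ?invr_eq0 ?emb_neq0 // vdiv ?emb_neq0 //; lia.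
  have [r [hr er]] := hcol x hx q hq.
  by move: er; rewrite /x divfK // => /emb_inj ->.
have hsub : forall y, I y -> Iv v a i y.
  by move=> y hy; have [->|hy0] := eqVneq y 0; [left|right; apply: hmin].
have [hni|hin] := leqP n i.
  exists n => // y; split; last exact: hC.
  by move/hsub; apply: Iv_mono.
exists i; first exact: ltnW.
move=> y; split; first exact: hsub.
apply: FILL => // j hij.
have fromC : (n <= j)%N -> exists y, [/\ I y, y != 0 & w y = a j].
  move=> hnj; have [r [hr hrw]] := exist_val j; exists r; split=> //.
  by apply: hC; right; rewrite hrw; apply: a_le.
have [eij|nij] := eqVneq j i; first by exists q; rewrite eij.
have [hnj|hjn] := leqP n j; first exact: fromC.
have hij' : (i < j)%N by rewrite ltn_neqAle eq_sym nij hij.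
case: i hq hqw hmin hsub hin hij nij hij' {y} => [|i] hq hqw hmin hsub hin hij nij hij'.
  have [r [hr hrw]] := exist_val j; exists (r * q); split.
  - exact: idealM.
  - exact: mulf_neq0.
  - by rewrite wM // hrw hqw a0 addr0.
have hPP : PP i.+1 q by apply: c3 => //; lia.
have hI2 : forall z, Iv v a i.+3 z -> I z.
  move=> z hz; have [->|hz0] := eqVneq z 0; first exact: ideal0.
  set x := emb z / emb q.
  have hx : forall y, I y -> exists r, x * emb y = emb r.
    move=> y hy; have [t [ht et]] := hPP y z (hsub y hy) hz.
    by exists t; rewrite /x; apply: G3 => //; rewrite -!embM et.
  have [r [hr er]] := hcol x hx q hq.
  by move: er; rewrite /x divfK // => /emb_inj ->.
have [hj2|hj2] := leqP i.+3 j.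
  have [r [hr hrw]] := exist_val j; exists r; split=> //.
  by apply: hI2; right; rewrite hrw; apply: a_le.
have ej : j = i.+2 by lia.
subst j.
case: (pselect (exists y, [/\ I y, y != 0 & w y = a i.+2])) => // hno.
exfalso.
have [p [hp0 hpw]] := exist_val i.+2.
have hpe : emb p != 0 := emb_neq0 hp0.
have hup : forall y, I y -> y != 0 -> a i.+1 < w y -> Iv v a i.+3 y.
  move=> y hy hy0 hlt; apply: Iv_gt => //.
  have [k hk] := w_H hy0; rewrite -hk in hlt *.
  have hk1 : (i.+2 <= k)%N by apply: a_lt_inv.
  have : k != i.+2 by apply/eqP => ek; apply: hno; exists y; split=> //; rewrite -hk ek.
  move=> hk2; apply: a_lt; lia.
set x := emb p / emb q.
have hx : forall y, I y -> exists r, x * emb y = emb r.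
  move=> y hy.
  have [s [y1 [ey hy1]]] : exists s y1, y = s * q + y1 /\ Iv v a i.+3 y1.
    have [->|hy0] := eqVneq y 0; first by exists 0, 0; rewrite mul0r addr0; split=> //; left.
    have hmy := hmin y hy hy0.
    have [eqy|gty] := eqVneq (w y) (a i.+1).
      have [s hs] := approx hy0 hq0 (etrans eqy (esym hqw)).
      exists s, (y - s * q); split; first by rewrite addrC subrK.
      have [e0|hne] := eqVneq (y - s * q) 0; first by rewrite e0; left.
      have hlt : w y < w (y - s * q) by case/orP: hs => // e0; rewrite e0 in hne.
      apply: hup => //; last by rewrite -eqy.
      by apply: idealB => //; apply: idealM.
    exists 0, y; rewrite mul0r add0r; split=> //.
    by apply: hup => //; rewrite lt_neqAle eq_sym gty hmy.
  have hpI : Iv v a i.+1 p by right; rewrite hpw; apply: a_le.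
  have [t [ht et]] := hPP p y1 hpI hy1.
  exists (s * p + t); rewrite ey !embD !embM.
  by rewrite /x; apply: G5 => //; rewrite -!embM et.
have [r [hr er]] := hcol x hx q hq.
move: er; rewrite /x divfK // => /emb_inj epr.
by apply: hno; exists p; split=> //; rewrite epr.
Qed.

Lemma split_i i q y : q != 0 -> w q = a i -> Iv v a i y ->
  exists s y1, y = s * q + y1 /\ Iv v a i.+1 y1.
Proof.
move=> hq0 hqw hy.
have [->|hy0] := eqVneq y 0; first by exists 0, 0; rewrite mul0r addr0; split=> //; left.
have hmy := Iv_val hy0 hy.
have [eqy|gty] := eqVneq (w y) (a i).
  have [s hs] := approx hy0 hq0 (etrans eqy (esym hqw)).
  exists s, (y - s * q); split; first by rewrite addrC subrK.
  have [e0|hne] := eqVneq (y - s * q) 0; first by rewrite e0; left.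
  have hlt : w y < w (y - s * q) by case/orP: hs => // e0; rewrite e0 in hne.
  by apply: Iv_gt => //; rewrite -eqy.
exists 0, y; rewrite mul0r add0r; split=> //.
by apply: Iv_gt => //; rewrite lt_neqAle eq_sym gty hmy.
Qed.

Lemma Iv_next j y : Iv v a j.+1 y -> (y != 0 -> w y != a j.+1) -> Iv v a j.+2 y.
Proof.
move=> hy hne; have [->|hy0] := eqVneq y 0; first by left.
apply: Iv_gt => //; rewrite lt_neqAle eq_sym (hne hy0) Iv_val //.
Qed.

Lemma PP_top i q : (n <= i.+2)%N -> q != 0 -> w q = a i -> PP i q.
Proof.
move=> hn hq0 hqw y z hy hz.
have [->|hy0] := eqVneq y 0; first by exists 0; split; [left|rewrite mul0r mulr0].
have [->|hz0] := eqVneq z 0; first by exists 0; split; [left|rewrite mulr0 mulr0].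
have hyz : y * z != 0 by rewrite mulf_neq0.
have hya := Iv_val hy0 hy; have hza := Iv_val hz0 hz.
have han : a n <= a i.+2 by apply: a_le.
have [r er] : exists r, emb (y * z) / emb q = emb r.
  apply: F1; first by rewrite mulf_neq0 ?invr_eq0 ?emb_neq0.
  rewrite vdiv ?emb_neq0 // wM //; lia.
have E : y * z = q * r by apply: emb_inj; rewrite [emb (q * r)]embM; apply: G6 => //; exact: emb_neq0.
have hr0 : r != 0 by apply/negP => /eqP e0; move: hyz; rewrite E e0 mulr0 eqxx.
exists r; split=> //; right.
have : w (y * z) = w (q * r) by rewrite E.
rewrite !wM // => e; lia.
Qed.

Definition Pprop i q p := forall z, Iv v a i.+2 z -> exists t, Iv v a i.+2 t /\ p * z = q * t.

Lemma STEP i q p : q != 0 -> w q = a i -> p != 0 -> w p = a i.+1 ->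
  Pprop i q p -> PP i.+1 p -> PP i q.
Proof.
move=> hq0 hqw hp0 hpw hP hPP y z hy hz.
have claimA : forall y1, Iv v a i.+1 y1 -> exists t, Iv v a i.+2 t /\ y1 * z = q * t.
  move=> y1 hy1.
  have [w0 [hw0 ew0]] := hP z hz.
  have hw03 : Iv v a i.+3 w0.
    have [->|hw00] := eqVneq w0 0; first by left.
    have hz0 : z != 0 by apply/negP => /eqP e0; move: ew0; rewrite e0 mulr0 => /esym/eqP; rewrite mulf_eq0 (negPf hq0) (negPf hw00).
    have : w (p * z) = w (q * w0) by rewrite ew0.
    rewrite !wM // hpw hqw => e.
    have := Iv_val hz0 hz; have := a_lt (ltnSn i).
    move=> h1 h2; apply: Iv_gt => //; lia.
  have [t [ht et]] := hPP y1 w0 hy1 hw03.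
  exists t; split; first exact: Iv_mono ht.
  apply: (mulfI hp0); rewrite mulrCA ew0 mulrCA et; ring.
have [s [y1 [-> hy1]]] := split_i hq0 hqw hy.
have [t [ht et]] := claimA y1 hy1.
exists (s * z + t); split; first by apply: idealD (Iv_ideal _) _ ht; apply: idealM (Iv_ideal _) hz.
by rewrite mulrDl et; ring.
Qed.

Definition Jq i q x := exists s, Iv v a i.+2 (x - s * q).

Lemma Jq_ideal i q : is_ideal (Jq i q).
Proof.
split; first by exists 0; rewrite mul0r subr0; left.
- move=> x y [s hs] [t ht]; exists (s + t).
  have -> : x + y - (s + t) * q = (x - s * q) + (y - t * q) by ring.
  exact: idealD (Iv_ideal _) hs ht.
- move=> r x [s hs]; exists (r * s).
  have -> : r * x - r * s * q = r * (x - s * q) by ring.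
  exact: idealM (Iv_ideal _) hs.
Qed.
Lemma Jq_q i q : Jq i q q.
Proof. by exists 1; rewrite mul1r subrr; left. Qed.
Lemma Jq_sub i q x : Iv v a i.+2 x -> Jq i q x.
Proof. by exists 0; rewrite mul0r subr0. Qed.

Lemma NotP_COL i q : (i.+2 <= n)%N -> q != 0 -> w q = a i ->
  ~ (exists p, [/\ p != 0, w p = a i.+1 & Pprop i q p]) -> COL (Jq i q).
Proof.
move=> hin hq0 hqw hno x hcol y hy.
have [->|hx] := eqVneq x 0.
  by exists 0; split; [apply: ideal0 (Jq_ideal _ _)|rewrite mul0r emb0].
have hqe : emb q != 0 := emb_neq0 hq0.
have hv : 0 <= v x.
  by apply: RC hx _ hcol => r hr; apply: Jq_sub; apply: Iv_mono hr.
have [r1 er1] := hcol q (Jq_q i q).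
have hr1 : r1 != 0 by rewrite -emb_eq0 -er1 mulf_neq0.
have hr1i : Iv v a i r1.
  right; rewrite -er1 vM // hqw; lia.
have [t [e1 [er1' he1]]] := split_i hq0 hqw hr1i.
set x' := x - emb t.
have ex' : x' * emb q = emb e1.
  by rewrite /x' mulrBl er1 er1' embD embM addrC addKr.
have K : forall z, Iv v a i.+2 z -> exists r', Iv v a i.+2 r' /\ x' * emb z = emb r'.
  move=> z hz; have [rz erz] := hcol z (Jq_sub q hz).
  exists (rz - t * z); split; last by rewrite /x' mulrBl erz embB embM.
  have [e0|hne] := eqVneq (rz - t * z) 0; first by rewrite e0; left.
  have hx'0 : x' != 0.
    apply/negP => /eqP e0; move: hne; rewrite -emb_eq0 embB embM -erz.
    by rewrite -mulrBl -/x' e0 mul0r eqxx.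
  have he10 : e1 != 0 by rewrite -emb_eq0 -ex' mulf_neq0.
  have hz0 : z != 0.
    by apply/negP => /eqP e0; move: hne; rewrite -emb_eq0 embB embM -erz e0 emb0 !mulr0 subrr eqxx.
  have vx' : v x' + a i = w e1 by rewrite -ex' vM // hqw.
  have := Iv_val he10 he1; have := a_lt (ltnSn i); have := Iv_val hz0 hz.
  have : v (x' * emb z) = v x' + w z by rewrite vM ?emb_neq0.
  rewrite /x' mulrBl erz -embM -embB => e h1 h2 h3.
  right; rewrite e -/x'; lia.
have he12 : Iv v a i.+2 e1.
  apply: Iv_next => // he10; apply/eqP => hw; apply: hno; exists e1; split=> //.
  move=> z hz; have [r' [hr' er']] := K z hz; exists r'; split=> //.
  by apply: emb_inj; rewrite !embM -ex' -er' [LHS]mulrAC [LHS]mulrC.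
case: hy => s hs.
have [r2 [hr2 er2]] := K _ hs.
exists (t * y + (s * e1 + r2)); split.
  apply: idealD (Jq_ideal _ _) _ _; first by apply: idealM (Jq_ideal _ _) _; exists s.
  apply: Jq_sub; apply: idealD (Iv_ideal _) _ hr2; exact: idealM (Iv_ideal _) he12.
have -> : x = x' + emb t by rewrite /x' subrK.
have -> : emb y = emb s * emb q + emb (y - s * q) by rewrite embB embM addrC subrK.
rewrite mulrDl mulrDr er2 mulrCA ex' !embD !embM; ring.
Qed.

Lemma wB_lt (x y : R) : x != 0 -> y != 0 -> w x < w y -> x - y != 0 /\ w (x - y) = w x.
Proof.
move=> hx hy hl; have [h1 h2] := vB_lt (emb_neq0 hx) (emb_neq0 hy) hl.
by rewrite -embB emb_eq0 in h1; rewrite embB.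
Qed.

Lemma c1_P (c1 : forall I, in_T I <-> in_I v a n I) i q :
  (i.+2 <= n)%N -> q != 0 -> w q = a i ->
  exists p, [/\ p != 0, w p = a i.+1 & Pprop i q p].
Proof.
move=> hin hq0 hqw.
case: (pselect (exists p, [/\ p != 0, w p = a i.+1 & Pprop i q p])) => // hno.
exfalso.
have hT : in_T (Jq i q).
  split; last by exists q; split; [apply: Jq_q | apply/eqP].
  apply: TRconv; [exact: Jq_ideal | by exists q; split; [apply: Jq_q|] | exact: NotP_COL].
have [j hj e] := proj1 (c1 _) hT.
have hqj : Iv v a j q by apply/e; apply: Jq_q.
have hajq := Iv_val hq0 hqj.
have [p0 [hp00 hp0w]] := exist_val i.+1.
have hi1 := a_lt (ltnSn i); have hi2 := a_lt (ltnSn i.+1).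
have : Jq i q p0 by apply/e; right; rewrite hp0w; lia.
case=> s hs.
have [hsq0 hsqw] : s * q != 0 /\ w (s * q) = a i.+1.
  have [e0|hne] := eqVneq (p0 - s * q) 0.
    have -> : s * q = p0 by apply/eqP; rewrite eq_sym -subr_eq0 e0.
    by split.
  have hl : w p0 < w (p0 - s * q) by rewrite hp0w; have := Iv_val hne hs; lia.
  have [h1 h2] := wB_lt hp00 hne hl.
  by move: h1 h2; rewrite opprB addrC subrK => -> ->.
apply: hno; exists (s * q); split=> // z hz; exists (s * z); split.
  exact: idealM (Iv_ideal _) hz.
by ring.
Qed.

Lemma c1_c3 (c1 : forall I, in_T I <-> in_I v a n I) :
  forall i, (1 <= i)%N -> (i <= n - 2)%N -> forall q, q != 0 -> w q = a i -> PP i q.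
Proof.
suff: forall d i, (i + d = n - 2)%N -> forall q, q != 0 -> w q = a i -> PP i q.
  by move=> h i h1 h2 q; apply: (h (n - 2 - i)%N); lia.
elim=> [|d IH] i hd q hq0 hqw.
  by apply: PP_top => //; lia.
have hin : (i.+2 <= n)%N by lia.
have [p [hp0 hpw hP]] := c1_P c1 hin hq0 hqw.
by apply: (STEP hq0 hqw hp0 hpw hP); apply: IH => //; lia.
Qed.

Lemma div_cond i q q' wv : q != 0 -> q' != 0 -> wv != 0 -> w q = w q' ->
  Iv v a i.+2 wv -> c <= w wv -> exists z, Iv v a i.+2 z /\ q' * z = q * wv.
Proof.
move=> hq0 hq'0 hwv0 eqq hwv hc.
have [r er] : exists r, emb q * emb wv / emb q' = emb r.
  apply: F1; first by rewrite !mulf_neq0 ?invr_eq0 ?emb_neq0.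
  rewrite vdiv ?mulf_neq0 ?emb_neq0 // vM ?emb_neq0 // eqq; lia.
have E : q * wv = q' * r.
  by apply: emb_inj; rewrite embM [emb (q' * r)]embM; apply: G6 => //; exact: emb_neq0.
have hr0 : r != 0.
  apply/negP => /eqP e0; move: E; rewrite e0 mulr0 => /eqP.
  by rewrite mulf_eq0 (negPf hq0) (negPf hwv0).
exists r; split=> //; right.
have : w (q * wv) = w (q' * r) by rewrite E.
rewrite !wM // eqq => ee; have := Iv_val hwv0 hwv; lia.
Qed.

Lemma PQ i q q' : (i.+2 <= n)%N -> q != 0 -> w q = a i -> PP i q ->
  q' != 0 -> w q' = a i -> PP i q'.
Proof.
move=> hin hq0 hqw hPP hq'0 hq'w.
have [s hs] := approx hq'0 hq0 (etrans hq'w (esym hqw)).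
set e := q' - s * q.
have eq' : q' = s * q + e by rewrite /e addrC subrK.
have he : Iv v a i e.
  have [->|hne] := eqVneq e 0; first by left.
  have hl : w q' < w e by case/orP: hs => // e0; rewrite -/e e0 in hne.
  by right; lia.
have [hs0 hsw] : s != 0 /\ w s = 0.
  have [hsq0 hsqw] : s * q != 0 /\ w (s * q) = a i.
    have [e0|hne] := eqVneq e 0.
      by move: eq'; rewrite e0 addr0 => <-; split.
    have hl : w q' < w e by case/orP: hs => // e0; rewrite -/e e0 in hne.
    have [h1 h2] := wB_lt hq'0 hne hl.
    by move: h1 h2; rewrite /e opprB addrC subrK => -> ->.
  have hs0 : s != 0 by apply/negP => /eqP e0; move: hsq0; rewrite e0 mul0r eqxx.
  by split=> //; move: hsqw; rewrite wM // hqw => h; lia.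
have hsu := unitR hs0 hsw.
set si := s^-1.
have hsi : s * si = 1 by rewrite /si mulrV.
have hsiu : si \is a GRing.unit by rewrite /si unitrV.
have [hsi0 hsiw] := w_unit hsiu.
have SUR : forall wv, Iv v a i.+2 wv -> exists z, Iv v a i.+2 z /\ q' * z = q * wv.
  move=> wv hwv.
  have [->|hwv0] := eqVneq wv 0; first by exists 0; split; [left|rewrite !mulr0].
  have [j hj] := w_H hwv0.
  suff: forall N wv j, wv != 0 -> Iv v a i.+2 wv -> a j = w wv -> (n - j <= N)%N ->
      exists z, Iv v a i.+2 z /\ q' * z = q * wv.
    by move=> /(_ (n - j)%N wv j hwv0 hwv hj (leqnn _)).
  clear wv hwv hwv0 j hj.
  elim=> [|N IH] wv j hwv0 hwv hj hN.
    by apply: (div_cond hq0 hq'0 hwv0 (etrans hqw (esym hq'w)) hwv); rewrite -hj; apply: a_le; lia.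
  have [hnj|hjn] := leqP n j.
    by apply: (div_cond hq0 hq'0 hwv0 (etrans hqw (esym hq'w)) hwv); rewrite -hj; apply: a_le.
  have [we [hwe ewe]] := hPP e wv he hwv.
  set z0 := si * wv.
  have hz0 : Iv v a i.+2 z0 by apply: idealM (Iv_ideal _) hwv.
  have [e0|hwe0] := eqVneq we 0.
    exists z0; split=> //; move: ewe; rewrite e0 mulr0 => ewe.
    apply/eqP; rewrite -subr_eq0.
    have -> : q' * z0 - q * wv = q * wv * (s * si - 1) + si * (e * wv) by rewrite /z0 eq'; ring.
    by rewrite hsi ewe subrr !mulr0 addr0.
  have he0 : e != 0 by apply/negP => /eqP e0; move: ewe; rewrite e0 mul0r => /esym/eqP; rewrite mulf_eq0 (negPf hq0) (negPf hwe0).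
  set w2 := - (si * we).
  have hw20 : w2 != 0 by rewrite oppr_eq0 mulf_neq0.
  have hw2 : Iv v a i.+2 w2 by apply: idealN (Iv_ideal _) _; apply: idealM (Iv_ideal _) hwe.
  have ww2 : w w2 = w we by rewrite /w2 embN vN wM // hsiw add0r.
  have vwe : w e + w wv = a i + w we.
    by rewrite -hqw -!wM // ewe.
  have hl : w q' < w e by case/orP: hs => // e0; rewrite -/e e0 in he0.
  have hlt : w wv < w w2 by rewrite ww2; lia.
  have [j1 hj1] := w_H hw20.
  have hjj : (j < j1)%N by apply: a_lt_inv; rewrite hj hj1.
  have [z2 [hz2 ez2]] := IH w2 j1 hw20 hw2 hj1 ltac:(lia).
  exists (z0 + z2); split; first exact: idealD (Iv_ideal _) hz0 hz2.
  apply/eqP; rewrite -subr_eq0.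
  have -> : q' * (z0 + z2) - q * wv = q * wv * (s * si - 1) + si * (e * wv - q * we) + (q' * z2 - q * w2).
    by rewrite /z0 /w2 eq'; ring.
  by rewrite hsi ewe ez2 !subrr !mulr0 !addr0.
move=> y z hy hz; have [t [ht et]] := hPP y z hy hz.
have [z' [hz' ez']] := SUR t ht; exists z'; split=> //; by rewrite et -ez'.
Qed.


Lemma wN (x : R) : w (- x) = w x.
Proof. by rewrite embN vN. Qed.

Definition GoodAll := forall i, (1 <= i)%N -> (i <= n - 2)%N ->
  forall q, q != 0 -> w q = a i -> PP i q.

Lemma in_I_T (I : R -> Prop) : in_I v a n I -> in_T I.
Proof.
case=> i hi e; have [[M hM] [x [hx hx0]]] := I_in_T hi.
split; first by exists M => y; apply: iff_trans (e y) (hM y).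
by exists x; split=> //; apply/e.
Qed.

Lemma c3_c1 : GoodAll -> forall I, in_T I <-> in_I v a n I.
Proof. by move=> hg I; split; [apply: T_in_I | apply: in_I_T]. Qed.

Lemma Jq_T i q : (i.+2 <= n)%N -> q != 0 -> w q = a i ->
  ~ (exists p, [/\ p != 0, w p = a i.+1 & Pprop i q p]) -> in_T (Jq i q).
Proof.
move=> hin hq0 hqw hno.
split; last by exists q; split; [apply: Jq_q | apply/eqP].
apply: TRconv; [exact: Jq_ideal | by exists q; split; [apply: Jq_q|] | exact: NotP_COL].
Qed.

Lemma distinct i p0 ql qm d : p0 != 0 -> w p0 = a i.+1 ->
  ~ (exists p, [/\ p != 0, w p = a i.+1 & Pprop i qm p]) ->
  ql = qm + d * p0 -> ideal_eq (Jq i ql) (Jq i qm) -> max_ideal d.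
Proof.
move=> hp00 hp0w hno eql e; apply/negP => hdu.
have [hd0 hdw] := w_unit hdu.
have [s hs] : Jq i qm ql by apply/e; apply: Jq_q.
set T := ql - s * qm in hs.
have hdp0 : d * p0 != 0 by rewrite mulf_neq0.
have wdp : w (d * p0) = a i.+1 by rewrite wM // hdw hp0w add0r.
have ep : (s - 1) * qm = d * p0 - T by rewrite /T eql; ring.
apply: hno; exists ((s - 1) * qm); split.
- have [e0|hT0] := eqVneq T 0; first by rewrite ep e0 subr0.
  have hl : w (d * p0) < w T by rewrite wdp; have := Iv_val hT0 hs; have := a_lt (ltnSn i.+1); lia.
  by rewrite ep; case: (wB_lt hdp0 hT0 hl).
- have [e0|hT0] := eqVneq T 0; first by rewrite ep e0 subr0.
  have hl : w (d * p0) < w T by rewrite wdp; have := Iv_val hT0 hs; have := a_lt (ltnSn i.+1); lia.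
  by rewrite ep; case: (wB_lt hdp0 hT0 hl) => _ ->.
- move=> z hz; exists ((s - 1) * z); split; first exact: idealM (Iv_ideal _) hz.
  by ring.
Qed.

Lemma c4_c1 : residue_field_infinite R -> T_finite R -> forall I, in_T I <-> in_I v a n I.
Proof.
move=> hinf [k [Js hJs]].
case: (pselect GoodAll) => [hg|ng]; first exact: c3_c1.
exfalso.
set P := fun i => `[< [/\ (1 <= i)%N, (i <= n - 2)%N & ~ (forall q, q != 0 -> w q = a i -> PP i q)] >].
have exP : exists i, P i.
  case: (pselect (exists i, P i)) => // hne; exfalso; apply: ng => i h1 h2 q.
  case: (pselect (forall q, q != 0 -> w q = a i -> PP i q)) => [h|hn]; first exact: h q.
  by exfalso; apply: hne; exists i; apply/asboolP; split.
have ubP : forall i, P i -> (i <= n)%N.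
  by move=> i /asboolP [_ h _]; lia.
case: (@ex_maxnP P n exP ubP) => i /asboolP [h1 h2 hbad] hmax.
have hi3 : (i.+3 <= n)%N.
  case: (leqP i.+3 n) => // hlt; exfalso; apply: hbad => q hq0 hqw.
  by apply: PP_top => //; lia.
have hgood : forall q, q != 0 -> w q = a i.+1 -> PP i.+1 q.
  case: (pselect (forall q, q != 0 -> w q = a i.+1 -> PP i.+1 q)) => // hn.
  have : (i.+1 <= i)%N by apply: hmax; apply/asboolP; split=> //; lia.
  by rewrite ltnn.
have [q0 [hq00 hq0w hnPP]] : exists q0, [/\ q0 != 0, w q0 = a i & ~ PP i q0].
  case: (pselect (exists q0, [/\ q0 != 0, w q0 = a i & ~ PP i q0])) => // hn.
  exfalso; apply: hbad => q hq0 hqw.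
  by case: (pselect (PP i q)) => // hnp; exfalso; apply: hn; exists q.
have hin : (i.+2 <= n)%N by lia.
have hallq : forall q, q != 0 -> w q = a i ->
    ~ (exists p, [/\ p != 0, w p = a i.+1 & Pprop i q p]).
  move=> q hq0 hqw [p [hp0 hpw hP]]; apply: hnPP.
  have hPPq : PP i q by apply: (STEP hq0 hqw hp0 hpw hP); apply: hgood.
  exact: (PQ hin hq0 hqw hPPq hq00 hq0w).
have [p0 [hp00 hp0w]] := exist_val i.+1.
set qq := fun r => q0 + r * p0.
have hqq : forall r, qq r != 0 /\ w (qq r) = a i.
  move=> r; have [e0|hrp] := eqVneq (r * p0) 0; first by rewrite /qq e0 addr0.
  have hrpn : - (r * p0) != 0 by rewrite oppr_eq0.
  have hr0 : r != 0 by apply/negP => /eqP e0; move: hrp; rewrite e0 mul0r eqxx.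
  have hl : w q0 < w (- (r * p0)).
    rewrite wN wM // hp0w hq0w; have := w_ge0 hr0; have := a_lt (ltnSn i); lia.
  have [h1' h2'] := wB_lt hq00 hrpn hl.
  by move: h1' h2'; rewrite opprK -/(qq r) hq0w.
have hT : forall r, in_T (Jq i (qq r)).
  move=> r; have [h1' h2'] := hqq r; exact: Jq_T hin h1' h2' (hallq _ h1' h2').
have : forall j : 'I_k, exists lam : R,
    (exists l, ideal_eq (Jq i (qq l)) (Js j)) -> ideal_eq (Jq i (qq lam)) (Js j).
  move=> j; case: (pselect (exists l, ideal_eq (Jq i (qq l)) (Js j))) => [[l hl]|hn].
    by exists l.
  by exists 0.
case/fin_all_exists => lam hlam.
apply: hinf; exists (map lam (enum 'I_k)) => r.
have [j hj] := hJs _ (hT r).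
exists (lam j); first by apply: map_f; rewrite mem_enum.
have hl := hlam j (ex_intro _ r hj).
have [h1' h2'] := hqq (lam j).
apply: (distinct hp00 hp0w (hallq _ h1' h2') (d := r - lam j)).
  by rewrite /qq /= mulrBl -addrA [lam j * p0 + _]addrC subrK.
by move=> x; apply: iff_trans (hj x) (iff_sym (hl x)).
Qed.

Lemma c1_c4 : (forall I, in_T I <-> in_I v a n I) -> T_finite R.
Proof.
move=> c1; exists n.+1, (fun j : 'I_n.+1 => Iv v a j) => I /c1 [i hi e].
by exists (Ordinal (hi : (i < n.+1)%N)).
Qed.

Lemma main_thm :
  let c1 := forall I : R -> Prop, in_T I <-> in_I v a n I in
  let c2 := forall i, (1 <= i)%N -> (i <= n - 2)%N ->
              exists q : R, [/\ q != 0, v (emb q) = a i &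
                ideal_eq (ideal_mul (Iv v a i) (Iv v a i.+2)) (elem_mul q (Iv v a i.+2))] in
  let c3 := forall i, (1 <= i)%N -> (i <= n - 2)%N -> forall q : R,
              q != 0 -> v (emb q) = a i ->
                ideal_eq (ideal_mul (Iv v a i) (Iv v a i.+2)) (elem_mul q (Iv v a i.+2)) in
  let c4 := T_finite R in
  [/\ c1 <-> c2, c1 <-> c3 & (residue_field_infinite R -> (c1 <-> c4))].
Proof.
move=> c1 c2 c3 c4.
have G_c3 : GoodAll -> c3.
  move=> hg i h1 h2 q hq0 hqw; apply: PP_Prod; first by right; rewrite hqw.
  exact: hg.
have c3_G : c3 -> GoodAll.
  by move=> h i h1 h2 q hq0 hqw; apply: Prod_PP; apply: h.
have c2_G : c2 -> GoodAll.
  move=> h i h1 h2 q hq0 hqw; have [q0 [hq00 hq0w e]] := h i h1 h2.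
  have hin : (i.+2 <= n)%N by lia.
  exact: (PQ hin hq00 hq0w (Prod_PP e) hq0 hqw).
have G_c2 : GoodAll -> c2.
  move=> hg i h1 h2; have [q [hq hqw]] := exist_val i; exists q; split=> //.
  by apply: PP_Prod; [right; rewrite hqw | exact: hg].
have c1_G : c1 -> GoodAll by move=> h; apply: c1_c3.
have G_c1 : GoodAll -> c1 by apply: c3_c1.
split.
- by split; [move=> /c1_G /G_c2 | move=> /c2_G /G_c1].
- by split; [move=> /c1_G /G_c3 | move=> /c3_G /G_c1].
- by move=> hinf; split; [apply: c1_c4 | apply: c4_c1].
Qed.

End Main.

Unset Implicit Arguments.

Theorem theorem3p8 (R : idomainType) (v : QR R -> int) (a : nat -> int) (n : nat)
  (Hnoeth : noetherian R) (Hloc : local_ring R) (Hdim : krull_dim_one R)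
  (Hfin : Rbar_finite R) (HRbarloc : Rbar_local R) (Hres : residue_iso R)
  (Hv : normalized_valuation_of_Rbar v) (Ha : enumerates_H v a)
  (Hn : conductor_index a n) (Hn3 : (3 <= n)%N) :
  let c1 := forall I : R -> Prop, in_T I <-> in_I v a n I in
  let c2 := forall i, (1 <= i)%N -> (i <= n - 2)%N ->
              exists q : R, [/\ q != 0, v (emb q) = a i &
                ideal_eq (ideal_mul (Iv v a i) (Iv v a i.+2)) (elem_mul q (Iv v a i.+2))] in
  let c3 := forall i, (1 <= i)%N -> (i <= n - 2)%N -> forall q : R,
              q != 0 -> v (emb q) = a i ->
                ideal_eq (ideal_mul (Iv v a i) (Iv v a i.+2)) (elem_mul q (Iv v a i.+2)) in
  let c4 := T_finite R in
  [/\ c1 <-> c2, c1 <-> c3 & (residue_field_infinite R -> (c1 <-> c4))].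
Proof.
exact: (main_thm Hfin Hres Hv Ha Hn Hn3).
Qed.
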